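(* Let $\mathcal F$ be a saturated fusion system over a finite $p$-group $S$, let $H\le S$ be fully $\mathcal F$-normalized and $\mathcal F$-centric, $N_{\mathcal F}=N_{\mathcal F}(H)$, and let $K\in\mathcal F^c$. For every $(A,\overline\varphi)\in[N_{\mathcal F}\times K]$ we have $A=N^{N_{\mathcal F}}_{\overline\varphi}\cap H$.
   Context: Fusion system $\mathcal F$ over $S$: objects the subgroups of $S$, morphisms injective homomorphisms containing conjugations $c_s:x\mapsto sxs^{-1}$ ($s\in S$), each morphism's isomorphism onto its image and its inverse in $\mathcal F$; saturated. $\operatorname{Aut}_T(P)=\{c_x|_P:x\in N_T(P)\}$. Fully $\mathcal F$-normalized: $|N_S(P')|\le|N_S(P)|$ for all $P'$ $\mathcal F$-isomorphic to $P$ (likewise for other fusion systems). $\mathcal F$-centric: $C_S(P')\le P'$ for all such $P'$; $\mathcal F^c$ the set of these. $N_{\mathcal F}(H)$: fusion system over $N_S:=N_S(H)$ whose morphisms $A\to B$ are the $\varphi\in\operatorname{Hom}_{\mathcal F}(A,B)$ extending to a morphism $AH\to BH$ in $\mathcal F$. Orbit category: $\operatorname{Hom}_{\mathcal O(\mathcal F)}(P,Q)=\operatorname{Aut}_Q(Q)\backslash\operatorname{Hom}_{\mathcal F}(P,Q)$, $\overline\varphi$ the class of $\varphi$. $[H\times_{\mathcal F}K]$: among pairs $(A,\overline\varphi)$, $A\in\mathcal F^c$, $A\le H$, $\overline\varphi\in\operatorname{Hom}_{\mathcal O(\mathcal F)}(A,K)$, put $(A,\overline\varphi)\precsim(B,\overline\psi)$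 iff some $h\in H$ has $h^{-1}Ah\le B$ and $\overline\varphi\,\overline{c_h}=\overline\psi\,\overline\iota$; $[H\times_{\mathcal F}K]$ has one representative of each mutual-$\precsim$ class of maximal pairs. For $A,K\in\mathcal F^c$ with $A\le N_S$ and $\varphi\in\operatorname{Hom}_{\mathcal F}(A,K)$: ${}^{N_{\mathcal F}}_{\varphi}N=\{x\in N_K(\varphi(A)):\varphi^{-1}c_x\varphi\in\operatorname{Aut}_{N_{\mathcal F}}(A)\}$; $\varphi$ is an $N_{\mathcal F}$-top if $A$ is fully $N_{\mathcal F}$-normalized and, with $N^{N_{\mathcal F}}_\varphi=\{x\in N_{N_S}(A):c_x\in\varphi^{-1}\operatorname{Aut}_{{}^{N_{\mathcal F}}_{\varphi}N}(\varphi(A))\varphi\}$, $\operatorname{Aut}_{{}^{N_{\mathcal F}}_{\varphi}N}(\varphi(A))=\varphi\operatorname{Aut}_{N^{N_{\mathcal F}}_\varphi}(A)\varphi^{-1}$. This property and $N^{N_{\mathcal F}}_\varphi$ depend only on $\overline\varphi$; write $N^{N_{\mathcal F}}_{\overline\varphi}$. $[N_{\mathcal F}\times K]\subseteq[H\times_{\mathcal F}K]$: one representative of each class of the relation $(A,\overline\varphi)\sim(B,\overline\psi)$ iff $\overline\varphi=\overline\psi\,\overline\theta$ for an isomorphism $\overline\theta:B\to A$ in $\mathcal O(N_{\mathcal F})$, chosen with $A$ fully $N_{\mathcal F}$-normalized and $\overline\varphi$ represented by an $N_{\mathcal F}$-top. *)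

(* Defs.v *)
From HB Require Import structures.
From mathcomp Require Import all_boot all_fingroup all_solvable.
Set Implicit Arguments. Unset Strict Implicit. Unset Printing Implicit Defensive.
Local Open Scope group_scope.

(* Morphisms are finite functions gT -> gT; a morphism "defined on P" is
   normalized to be the identity outside P. *)
Definition restrict (gT : finGroupType) (P : {set gT}) (f : gT -> gT)
  : {ffun gT -> gT} := [ffun x => if x \in P then f x else x].

(* The paper's conjugation c_s : x |-> s x s^-1  (MathComp: x ^ y = y^-1 x y). *)
Definition cmap (gT : finGroupType) (s : gT) : gT -> gT := fun x => x ^ s^-1.

(* A fusion system over S.  fhom P is Hom_F(P, S); Hom_F(P,Q) is the subset of
   maps with image in Q.  Objects are the subgroups of S. *)
Record fusion_system (gT : finGroupType) (S : {group gT}) := FusionSystem {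
  fhom : {set gT} -> {set {ffun gT -> gT}};
  fhom_sub : forall P f, f \in fhom P ->
    [/\ group_set P, P \subset S, f @: P \subset S,
        {in P &, {morph f : x y / x * y}} & {in P &, injective f}];
  fhom_out : forall P f, f \in fhom P -> forall x, x \notin P -> f x = x;
  fhom_conj : forall (P : {group gT}) s, P \subset S -> s \in S ->
    restrict P (cmap s) \in fhom P;
  fhom_inv : forall P f, f \in fhom P ->
    exists2 g, g \in fhom (f @: P) & {in P, cancel f g};
  fhom_comp : forall P Q f g, f \in fhom P -> g \in fhom Q -> f @: P \subset Q ->
    restrict P (fun x => g (f x)) \in fhom P
}.

Section Defs.
Variables (gT : finGroupType) (S : {group gT}) (F : fusion_system S).

Definition Hom (P Q : {set gT}) := [set f in fhom F P | f @: P \subset Q].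
Definition AutF (P : {set gT}) := [set f in fhom F P | f @: P == P].
Definition AutT (T P : {set gT}) := [set restrict P (cmap x) | x in 'N_T(P)].

Definition fully_normalized (P : {set gT}) :=
  (P \subset S) && [forall f in fhom F P, #|'N_S(f @: P)| <= #|'N_S(P)|].
Definition fully_centralized (P : {set gT}) :=
  (P \subset S) && [forall f in fhom F P, #|'C_S(f @: P)| <= #|'C_S(P)|].
Definition centric (P : {set gT}) :=
  (P \subset S) && [forall f in fhom F P, 'C_S(f @: P) \subset f @: P].

Definition Nphi (P : {set gT}) (f : {ffun gT -> gT}) :=
  [set g in 'N_S(P) | [exists h in 'N_S(f @: P),
      [forall a in P, f (cmap g a) == cmap h (f a)]]].

(* Saturation (Sylow axiom + extension axiom). *)
Definition saturated (p : nat) : Prop :=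
  (forall P : {group gT}, P \subset S -> fully_normalized P ->
     fully_centralized P /\
     [/\ AutT S P \subset AutF P, p.-nat #|AutT S P|
       & p^'.-nat (#|AutF P| %/ #|AutT S P|)])
  /\
  (forall (P : {group gT}) f, f \in fhom F P -> fully_centralized (f @: P) ->
     exists2 g, g \in fhom F (Nphi P f) & {in P, g =1 f}).

Variables (H K : {set gT}).
Let NS := 'N_S(H).

Definition NF_hom (A B : {set gT}) :=
  [set f in Hom A B | [&& A \subset NS, B \subset NS &
      [exists g in Hom (A * H) (B * H), [forall a in A, g a == f a]]]].
Definition NF_Aut (A : {set gT}) := [set f in NF_hom A A | f @: A == A].
Definition NF_isomorphic (A A' : {set gT}) :=
  [exists f in NF_hom A A', f @: A == A'].
Definition NF_fully_normalized (A : {set gT}) :=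
  (A \subset NS) &&
  [forall A' : {set gT}, NF_isomorphic A A' ==> (#|'N_NS(A')| <= #|'N_NS(A)|)].

(* Orbit category: the class  Aut_Q(Q) o phi  of phi : P -> Q. *)
Definition ocls (P Q : {set gT}) (f : gT -> gT) :=
  [set restrict P (fun x => cmap q (f x)) | q in Q].

Definition Nleft (A : {set gT}) (f : {ffun gT -> gT}) :=
  [set x in 'N_K(f @: A) | [exists al in NF_Aut A,
      [forall a in A, f (al a) == cmap x (f a)]]].
Definition NF_N (A : {set gT}) (f : {ffun gT -> gT}) :=
  [set x in 'N_NS(A) | [exists y in Nleft A f,
      [forall a in A, f (cmap x a) == cmap y (f a)]]].

Definition finv (A : {set gT}) (f : gT -> gT) : {ffun gT -> gT} :=
  [ffun b => odflt b [pick a in A | f a == b]].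
Definition conjby (A : {set gT}) (f g : gT -> gT) :=
  restrict (f @: A) (fun b => f (g (finv A f b))).

Definition NF_top (A : {set gT}) (f : {ffun gT -> gT}) :=
  NF_fully_normalized A &&
  (AutT (Nleft A f) (f @: A) ==
     [set conjby A f g | g : {ffun gT -> gT} in AutT (NF_N A f) A]).

(* pairs (A, phibar), phibar in Hom_{O(F)}(A,K) *)
Definition pairT := ({set gT} * {set {ffun gT -> gT}})%type.
Definition is_pair (pc : pairT) :=
  [&& group_set pc.1, centric pc.1, pc.1 \subset H &
      [exists f in Hom pc.1 K, pc.2 == ocls pc.1 K f]].
Definition pair_le (pc qc : pairT) :=
  [exists h in H, (pc.1 :^ h \subset qc.1) &&
     [exists f in pc.2, exists g in qc.2,
        ocls (pc.1 :^ h) K (fun x => f (cmap h x)) == ocls (pc.1 :^ h) K g]].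
Definition maximal_pair (pc : pairT) :=
  is_pair pc &&
  [forall qc : pairT, is_pair qc ==> pair_le pc qc ==> pair_le qc pc].
Definition mutual (pc qc : pairT) := pair_le pc qc && pair_le qc pc.

Definition is_HxFK (R : {set pairT}) : Prop :=
  (forall pc, pc \in R -> maximal_pair pc) /\
  (forall pc, maximal_pair pc -> #|[set qc in R | mutual pc qc]| = 1%N).

Definition sim (pc qc : pairT) :=
  [exists th in NF_hom pc.1 qc.1, exists et in NF_hom qc.1 pc.1,
     [&& ocls pc.1 pc.1 (fun x => et (th x)) == ocls pc.1 pc.1 id,
         ocls qc.1 qc.1 (fun x => th (et x)) == ocls qc.1 qc.1 id &
         [exists g in qc.2, pc.2 == ocls pc.1 K (fun x => g (th x))]]].

Definition is_NFxK (R R' : {set pairT}) : Prop :=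
  [/\ R' \subset R,
      (forall pc, pc \in R -> #|[set qc in R' | sim pc qc]| = 1%N) &
      (forall pc, pc \in R' -> NF_fully_normalized pc.1 /\
                               exists2 f, f \in pc.2 & NF_top pc.1 f)].

End Defs.

(* Main.v *)
Require Import Defs.
From HB Require Import structures.
From mathcomp Require Import all_boot all_fingroup all_solvable.
Set Implicit Arguments. Unset Strict Implicit. Unset Printing Implicit Defensive.
Local Open Scope group_scope.

Section H.
Variables (gT : finGroupType) (S : {group gT}) (F : fusion_system S).

Lemma cmapE (s x : gT) : cmap s x = s * x * s^-1.
Proof. by rewrite /cmap /conjg invgK mulgA. Qed.

Lemma cmap1 (x : gT) : cmap 1 x = x.
Proof. by rewrite cmapE invg1 mulg1 mul1g. Qed.

Lemma restr_fhom (P Q : {group gT}) (g : {ffun gT -> gT}) :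
  g \in fhom F Q -> P \subset Q -> restrict P g \in fhom F P.
Proof.
move=> gQ sPQ.
have sQS : Q \subset S by case: (fhom_sub gQ).
have idP : restrict P id \in fhom F P.
  have := fhom_conj F (subset_trans sPQ sQS) (group1 S).
  have -> // : restrict P (cmap 1) = restrict P id.
  by apply/ffunP => z; rewrite !ffunE cmap1.
have sub : restrict P id @: P \subset Q.
  apply/subsetP => z /imsetP [w wP ->]; rewrite ffunE wP /=.
  exact: subsetP sPQ w wP.
have := fhom_comp idP gQ sub.
have -> // : restrict P (fun x => g (restrict P id x)) = restrict P g.
by apply/ffunP => z; rewrite !ffunE; case zP: (z \in P).
Qed.

Lemma restr_im (P : {set gT}) (g : gT -> gT) : restrict P g @: P = g @: P.
Proof. by apply: eq_in_imset => z zP; rewrite ffunE zP. Qed.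

Lemma fc_lemma (A : {group gT}) (f : {ffun gT -> gT}) :
  centric F A -> f \in fhom F A -> fully_centralized F (f @: A).
Proof.
move=> /andP [sAS /forall_inP cA] fA.
have [_ _ fAS fM fI] := fhom_sub fA.
rewrite /fully_centralized fAS; apply/forall_inP => g gX.
have [gXg _ gXS gM gI] := fhom_sub gX.
pose X := Group gXg.
have gfA := fhom_comp fA gX (subxx _).
have cY := cA _ gfA.
rewrite restr_im (imset_comp g f) in cY.
have [g' g'Y gK] := fhom_inv gX.
have [_ _ _ _ g'I] := fhom_sub g'Y.
rewrite -(card_in_imset (sub_in2 (subsetP cY) g'I)).
apply: subset_leq_card; apply/subsetP => z /imsetP [w wC ->].
have wY := subsetP cY w wC.
case/imsetP: wY => u uX wE; rewrite wE.
rewrite gK //. have X1 := 1.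
rewrite inE (subsetP fAS u uX) /=.
apply/centP => v vX.
have XM : forall a b, a \in f @: A -> b \in f @: A -> a * b \in f @: A.
  by move=> a b aX bX; exact: (@groupM _ X).
apply: gI; rewrite ?XM //.
case/setIP: wC => _ /centP wC.
rewrite gM // gM //.
rewrite -wE; exact: wC (imset_f _ vX).
Qed.
End H.
Unset Implicit Arguments.
Set Strict Implicit.
Theorem corollary4p25 (gT : finGroupType) (p : nat) (S : {group gT})
    (F : fusion_system S) (H K : {group gT}) (R R' : {set pairT gT}) :
  prime p -> p.-group S -> saturated F p ->
  H \subset S -> fully_normalized F H -> centric F H -> centric F K ->
  is_HxFK F H K R -> is_NFxK F H K R R' ->
  forall pc, pc \in R' -> forall f, f \in pc.2 ->
    pc.1 = NF_N F H K pc.1 f :&: H.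
Proof.
move=> _ _ [_ satE] sHS _ _ cK [RHmax _] [sR'R _ _] pc pcR' f fpc.
have /andP [ispc maxle] := RHmax pc (subsetP sR'R pc pcR').
case/and4P: ispc => gA cA sAH /exists_inP [f0 f0Hom /eqP pc2].
move: pc pcR' fpc maxle pc2 gA cA sAH f0Hom => [A Phi] /= _ fpc maxle pc2 gA cA sAH f0Hom.
pose AG := Group gA.
have AGE : gval AG = A by [].
rewrite -AGE in cA sAH maxle pc2 fpc f0Hom *.
clear AGE.
have sKS : K \subset S by case/andP: cK.
have sAS : AG \subset S := subset_trans sAH sHS.
move: f0Hom; rewrite inE => /andP [f0A f0K].
move: fpc; rewrite pc2 => /imsetP [q qK fE].
have fA : f \in fhom F AG.
  have gq := fhom_conj F sKS (subsetP sKS q qK).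
  have := fhom_comp f0A gq f0K.
  have -> // : restrict AG (fun x => restrict K (cmap q) (f0 x)) = f.
  rewrite fE; apply/ffunP => z; rewrite !ffunE; case zA: (z \in AG) => //.
  by rewrite (subsetP f0K _ (imset_f _ zA)).
have fAK : f @: AG \subset K.
  rewrite fE restr_im; apply/subsetP => z /imsetP [w wA ->].
  rewrite cmapE !groupM ?groupV //; exact: (subsetP f0K _ (imset_f _ wA)).
have [_ _ fAS fM fI] := fhom_sub fA.
pose fm := @Morphism _ _ AG f fM.
have fAE : f @: AG = fm @* AG by rewrite morphimEdom.
have fconj : forall x a, x \in AG -> a \in AG -> f (cmap x a) = cmap (f x) (f a).
  move=> x a xA aA; rewrite /cmap.
  have h1 : f (a ^ x^-1) = f a ^ f (x^-1) := @morphJ _ _ AG fm _ _ aA (groupVr xA).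
  have h2 : f x^-1 = (f x)^-1 := @morphV _ _ AG fm _ xA.
  by rewrite h1 h2.
have sANS : AG \subset 'N_S(H).
  apply/subsetP => a aA; rewrite inE (subsetP sAS) //.
  exact: (subsetP (normG H)) (subsetP sAH a aA).
apply/eqP; rewrite eqEsubset; apply/andP; split.
- apply/subsetP => x xA.
  have xS := subsetP sAS x xA; have xH := subsetP sAH x xA.
  rewrite inE xH andbT inE.
  have xNA : x \in 'N_('N_S(H))(AG).
    by rewrite inE (subsetP sANS) // (subsetP (normG AG)).
  rewrite xNA /=.
  apply/exists_inP; exists (f x); last first.
    by apply/forall_inP => a aA; rewrite fconj.
  have fxA : f x \in f @: AG := imset_f _ xA.
  rewrite inE; apply/andP; split.
    rewrite inE (subsetP fAK _ fxA) /= fAE.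
    have fxA' : f x \in fm @* AG by rewrite -fAE.
    exact: (subsetP (normG _) _ fxA').
  apply/exists_inP; exists (restrict AG (cmap x)); last first.
    by apply/forall_inP => a aA; rewrite ffunE aA fconj.
  have calE : restrict AG (cmap x) @: AG = AG.
    by rewrite restr_im; apply/normP; rewrite groupV (subsetP (normG _)).
  have calH : restrict H (cmap x) @: H = H.
    by rewrite restr_im; apply/normP; rewrite groupV (subsetP (normG _)).
  rewrite inE calE eqxx andbT inE inE (fhom_conj F sAS xS) calE subxx sANS /=.
  apply/exists_inP; exists (restrict H (cmap x)).
    change (restrict H (cmap x) \in Hom F (AG * H) (AG * H)).
    by rewrite (mulSGid sAH) inE (fhom_conj F sHS xS) calH subxx.
  by apply/forall_inP => a aA; rewrite !ffunE aA (subsetP sAH a aA).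
- apply/subsetP => x /setIP [xN xH].
  move: xN; rewrite inE => /andP [xNNA /exists_inP [y yL /forall_inP fxy]].
  case/setIP: xNNA => /setIP [xS _] xNA.
  move: yL; rewrite inE => /andP [/setIP [yK yNfA] _].
  case: (boolP (x \in AG)) => // xnA; exfalso.
  have fc := fc_lemma cA fA.
  have [psi psiN psiE] := satE AG f fA fc.
  have [gN _ psiS psiM _] := fhom_sub psiN.
  pose NG := Group gN.
  pose pm := @Morphism _ _ NG psi psiM.
  have sAN : AG \subset NG.
    apply/subsetP => a aA; rewrite inE.
    rewrite inE (subsetP sAS) // (subsetP (normG _)) //=.
    apply/exists_inP; exists (f a).
      rewrite inE (subsetP fAS _ (imset_f _ aA)) fAE /=.
      have faA' : f a \in fm @* AG by rewrite -fAE imset_f.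
      exact: (subsetP (normG _) _ faA').
    by apply/forall_inP => b bA; rewrite fconj.
  have xNG : x \in Nphi S AG f.
    rewrite inE inE xS xNA /=.
    apply/exists_inP; exists y; first by rewrite inE (subsetP sKS) .
    by apply/forall_inP.
  have cA' : 'C_S(f @: AG) \subset f @: AG.
    by case/andP: cA => _ /forall_inP; apply.
  have psixK : psi x \in K.
    pose c := y^-1 * psi x.
    have cC : c \in 'C_S(f @: AG).
      have cS : c \in S.
        by rewrite groupM ?groupV ?(subsetP sKS y yK) ?(subsetP psiS _ (imset_f _ xNG)).
      rewrite inE cS /=.
      apply/centP => b /imsetP [a aA ->].
      have aN : a \in NG := subsetP sAN a aA.
      have e1 : psi (cmap x a) = cmap (psi x) (f a).
        have xN' : x \in NG := xNG.
        have h1 : psi (a ^ x^-1) = psi a ^ psi (x^-1) := @morphJ _ _ NG pm _ _ aN (groupVr xN').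
        have h2 : psi x^-1 = (psi x)^-1 := @morphV _ _ NG pm _ xN'.
        by rewrite /cmap h1 h2 psiE.
      have e2 : psi (cmap x a) = cmap y (f a).
        rewrite psiE; first exact/eqP/fxy.
        by rewrite /cmap memJ_norm // groupV.
      have E : f a ^ (psi x)^-1 = f a ^ y^-1 by rewrite -[LHS]e1 e2.
      apply: esym; apply/commgP/conjg_fixP.
      by rewrite /c conjgM -E -conjgM mulVg conjg1.
    have psixE : psi x = y * c by rewrite /c mulKVg.
    by rewrite psixE groupM // (subsetP fAK) // (subsetP cA' _ cC).
  pose B := (AG <*> <[x]>)%G.
  have sBN : B \subset NG by rewrite join_subG sAN cycle_subG.
  have psiBK : psi @: B \subset K.
    rewrite -(morphimEsub pm sBN).
    rewrite (morphimY pm sAN) ?cycle_subG // (morphim_cycle pm xNG) join_subG cycle_subG psixK andbT.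
    rewrite morphimEsub //= (eq_in_imset psiE) //.
  pose psiB := restrict B psi.
  have psiBf : psiB \in fhom F B := @restr_fhom _ _ F B NG psi psiN sBN.
  have sBH : B \subset H by rewrite join_subG sAH cycle_subG.
  have sAB : AG \subset B := joing_subl _ _.
  have cB : centric F B.
    rewrite /centric (subset_trans sBH sHS) /=; apply/forall_inP => g gB.
    have gA2 := restr_fhom gB sAB.
    have := (cA' ); move: cA => /andP [_ /forall_inP cA2].
    have := cA2 _ gA2; rewrite restr_im => sC _.
    apply: subset_trans _ (subset_trans sC (imsetS _ sAB)).
    by apply: setIS; apply: centS; apply: imsetS.
  pose qc : pairT gT := (gval B, ocls B K psiB).
  have isq : is_pair F H K qc.
    rewrite /is_pair /= groupP cB sBH /=.
    apply/exists_inP; exists psiB => //.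
    by rewrite inE psiBf restr_im psiBK.
  have fPhi : f \in Phi by rewrite pc2; apply/imsetP; exists q.
  have le1 : pair_le H K (gval AG, Phi) qc.
    apply/exists_inP; exists 1 => //; rewrite /= conjsg1 sAB /=.
    apply/exists_inP; exists f => //.
    apply/exists_inP; exists (restrict B (fun z => cmap 1 (psiB z))).
      by apply/imsetP; exists 1.
    apply/eqP; apply: eq_imset => r; apply/ffunP => z; rewrite !ffunE.
    case zA: (z \in AG) => //.
    rewrite (subsetP sAB z zA) cmap1 cmap1 ?ffunE ?(subsetP sAB z zA) ?psiE //.
  have := forallP maxle qc; rewrite isq le1 /= => /exists_inP [h hH /andP [sBA _]].
  have := subset_leq_card sBA; rewrite cardJg leqNgt proper_card //.
  rewrite properE sAB /=; apply/negP => sBA'; move/negP: xnA; apply.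
  by apply: (subsetP sBA'); rewrite (subsetP (joing_subr _ _)) // cycle_id.
Qed.
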